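(* Let $Q\in\mathcal N$ be an intrinsic vanishing point and $z$ a local holomorphic coordinate with $z(Q)=0$ and metric $h(z,\bar z)dz\,d\bar z$. Expand $-\frac{h_z}{h}=c_0+c_1\bar z+c_2z+c_3z^2+c_4\bar z^2+c_5z\bar z+O(|z|^3)$, let $\gamma_1=-c_0/2$, and set $\nu_2=c_5-2\gamma_1c_1$, $\nu_3=c_4-c_1\bar\gamma_1$. Then $\nu_2=\nu_3=0$. Consequently the normal-form coordinate $w=z+\gamma_1z^2+\gamma_2z^3+\gamma_3z^4$ (with $\gamma_2,\gamma_3$ determined by $c_2+2\gamma_1c_0+6\gamma_2=0$, $12\gamma_3+c_3+2\gamma_1c_2+3\gamma_2c_0=0$) of a solution of the Schrödinger map flow satisfies $i\partial_tw+\partial_x^2w=c_1\bar w(\partial_xw)^2+O(|w|^3)(\partial_xw)^2$.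
   Context: $Q$ is an intrinsic vanishing point if $[\ln h]_z(0)[\ln h]_{z\bar z}(0)-[\ln h]_{z\bar zz}(0)=0$ (Wirtinger derivatives). In the coordinate $z$ the 1D Schrödinger map flow reads $i\partial_tz+\partial_x^2z=-\frac{h_z}{h}(\partial_xz)^2$ (convention $J=$ multiplication by $i$; the paper writes the right side with the opposite sign). *)

(* Defs.v *)
From Stdlib Require Import Reals.
From Coquelicot Require Import Coquelicot.
Open Scope R_scope.

Notation CC := Complex.C.

Definition fun2 := R -> R -> CC.

Definition pd1 (g : fun2) : fun2 := fun a b =>
  (Derive (fun t => Re (g t b)) a, Derive (fun t => Im (g t b)) a).
Definition pd2 (g : fun2) : fun2 := fun a b =>
  (Derive (fun t => Re (g a t)) b, Derive (fun t => Im (g a t)) b).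

(* Wirtinger derivatives, with z = x + i y identified with (x, y). *)
Definition dz (g : fun2) : fun2 := fun x y =>
  (/2 * (pd1 g x y - Ci * pd2 g x y))%C.
Definition dzb (g : fun2) : fun2 := fun x y =>
  (/2 * (pd1 g x y + Ci * pd2 g x y))%C.

Definition inball (a0 b0 r : R) (a b : R) : Prop :=
  (a - a0) ^ 2 + (b - b0) ^ 2 < r ^ 2.

Fixpoint Ck (k : nat) (g : fun2) (U : R -> R -> Prop) : Prop :=
  match k with
  | O => forall a b, U a b ->
      continuous (fun p : R * R => g (fst p) (snd p)) (a, b)
  | S k' =>
      (forall a b, U a b ->
         continuous (fun p : R * R => g (fst p) (snd p)) (a, b) /\
         ex_derive (fun t => Re (g t b)) a /\ ex_derive (fun t => Im (g t b)) a /\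
         ex_derive (fun t => Re (g a t)) b /\ ex_derive (fun t => Im (g a t)) b)
      /\ Ck k' (pd1 g) U /\ Ck k' (pd2 g) U
  end.

Definition smooth_on (g : fun2) (U : R -> R -> Prop) : Prop := forall k, Ck k g U.

Definition cplx (h : R -> R -> R) : fun2 := fun x y => RtoC (h x y).

Definition lnh (h : R -> R -> R) : fun2 := fun x y => RtoC (ln (h x y)).

Definition intrinsic_vanishing (h : R -> R -> R) : Prop :=
  (dz (lnh h) 0 0 * dzb (dz (lnh h)) 0 0 - dz (dzb (dz (lnh h))) 0 0)%C = 0%C.

Definition mhz (h : R -> R -> R) (zeta : CC) : CC :=
  (- (dz (cplx h) (Re zeta) (Im zeta) / cplx h (Re zeta) (Im zeta)))%C.

(* The 1D Schroedinger map flow in the coordinate z (J = multiplication by i):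
   i d_t Z + d_x^2 Z = - (h_z/h)(Z) (d_x Z)^2, Z = Z(t, x). *)
Definition SMF_at (h : R -> R -> R) (Z : fun2) (t x : R) : Prop :=
  (Ci * pd1 Z t x + pd2 (pd2 Z) t x = mhz h (Z t x) * (pd2 Z t x * pd2 Z t x))%C.

(* Main.v *)
Require Import Defs.
From Stdlib Require Import Reals.
From Coquelicot Require Import Coquelicot.
Open Scope R_scope.


Require Import Defs.
From Stdlib Require Import Reals Lra.
From Coquelicot Require Import Coquelicot.
Open Scope R_scope.

Definition O3 (f : CC -> CC) := exists K d, 0 < d /\ forall z, Cmod z < d -> Cmod (f z) <= K * Cmod z ^ 3.
Definition Bnd (f : CC -> CC) := exists M d, 0 < d /\ forall z, Cmod z < d -> Cmod (f z) <= M.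

Lemma Bnd_const c : Bnd (fun _ => c).
Proof. exists (Cmod c), 1. split; [lra|]. intros; lra. Qed.

Lemma Bnd_id : Bnd (fun z => z).
Proof. exists 1, 1. split; [lra|]. intros; lra. Qed.

Lemma Bnd_conj : Bnd (fun z => Cconj z).
Proof. exists 1, 1. split; [lra|]. intros; rewrite Cmod_conj; lra. Qed.

Lemma Bnd_plus f g : Bnd f -> Bnd g -> Bnd (fun z => f z + g z)%C.
Proof.
  intros [M1 [d1 [H1 B1]]] [M2 [d2 [H2 B2]]].
  exists (M1 + M2), (Rmin d1 d2). split. apply Rmin_pos; auto.
  intros z Hz. eapply Rle_trans. apply Cmod_triangle.
  assert (Cmod z < d1) by (eapply Rlt_le_trans; [apply Hz| apply Rmin_l]).
  assert (Cmod z < d2) by (eapply Rlt_le_trans; [apply Hz| apply Rmin_r]).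
  specialize (B1 z H). specialize (B2 z H0). lra.
Qed.

Lemma Bnd_mult f g : Bnd f -> Bnd g -> Bnd (fun z => f z * g z)%C.
Proof.
  intros [M1 [d1 [H1 B1]]] [M2 [d2 [H2 B2]]].
  exists (M1 * M2), (Rmin d1 d2). split. apply Rmin_pos; auto.
  intros z Hz. rewrite Cmod_mult.
  assert (Cmod z < d1) by (eapply Rlt_le_trans; [apply Hz| apply Rmin_l]).
  assert (Cmod z < d2) by (eapply Rlt_le_trans; [apply Hz| apply Rmin_r]).
  specialize (B1 z H). specialize (B2 z H0).
  apply Rmult_le_compat; auto using Cmod_ge_0.
Qed.

Lemma O3_plus f g : O3 f -> O3 g -> O3 (fun z => f z + g z)%C.
Proof.
  intros [M1 [d1 [H1 B1]]] [M2 [d2 [H2 B2]]].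
  exists (M1 + M2), (Rmin d1 d2). split. apply Rmin_pos; auto.
  intros z Hz. eapply Rle_trans. apply Cmod_triangle.
  assert (Cmod z < d1) by (eapply Rlt_le_trans; [apply Hz| apply Rmin_l]).
  assert (Cmod z < d2) by (eapply Rlt_le_trans; [apply Hz| apply Rmin_r]).
  specialize (B1 z H). specialize (B2 z H0). lra.
Qed.

Lemma O3_mult f g : O3 f -> Bnd g -> O3 (fun z => f z * g z)%C.
Proof.
  intros [M1 [d1 [H1 B1]]] [M2 [d2 [H2 B2]]].
  exists (M1 * M2), (Rmin d1 d2). split. apply Rmin_pos; auto.
  intros z Hz. rewrite Cmod_mult.
  assert (Cmod z < d1) by (eapply Rlt_le_trans; [apply Hz| apply Rmin_l]).
  assert (Cmod z < d2) by (eapply Rlt_le_trans; [apply Hz| apply Rmin_r]).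
  specialize (B1 z H). specialize (B2 z H0).
  replace (M1 * M2 * Cmod z ^ 3) with ((M1 * Cmod z ^ 3) * M2) by ring.
  apply Rmult_le_compat; auto using Cmod_ge_0.
Qed.

Lemma O3_ext f g : (forall z, f z = g z) -> O3 f -> O3 g.
Proof. intros E [K [d [H B]]]. exists K, d. split; auto. intros; rewrite <- E; auto. Qed.

Lemma O3_mono (a b c : CC -> CC) :
  (forall z, Cmod (a z) = Cmod z) -> (forall z, Cmod (b z) = Cmod z) -> (forall z, Cmod (c z) = Cmod z) ->
  O3 (fun z => a z * b z * c z)%C.
Proof.
  intros Ha Hb Hc. exists 1, 1. split; [lra|]. intros z _.
  rewrite !Cmod_mult, Ha, Hb, Hc. right; ring.
Qed.

Lemma Cmod_id z : Cmod z = Cmod z. Proof. reflexivity. Qed.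
Lemma Cmod_cj z : Cmod (Cconj z) = Cmod z. Proof. apply Cmod_conj. Qed.

Definition NA (c1 g1 g2 g3 cg1 cg2 cg3 z zb : CC) : CC := ((-(48) * (g3*g3*z*z)) + (-(60) * (g2*g3*z)) + (-(18) * (g2*g2)) + (-(32) * (g1*g3)) + (72 * (g1*g2*g3*z*z)) + (54 * (g1*g2*g2*z)) + (16 * (g1*g1*g3*z)) + (48 * (g1*g1*g2)) + (-(32) * (g1*g1*g1*g3*z*z)) + (-(24) * (g1*g1*g1*g2*z)) + (-(16) * (g1*g1*g1*g1)))%C.
Definition NB (c1 g1 g2 g3 cg1 cg2 cg3 z zb : CC) : CC := ((-(4) * (c1*g3*z)) + (-(16) * (c1*g3*g3*z*z*z*z)) + (-(3) * (c1*g2)) + (-(24) * (c1*g2*g3*z*z*z)) + (-(9) * (c1*g2*g2*z*z)) + (-(8) * (c1*g1*g3*z*z)) + (-(6) * (c1*g1*g2*z)))%C.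
Definition NCc (c1 g1 g2 g3 cg1 cg2 cg3 z zb : CC) : CC := ((-(4) * (c1*g3*cg1*z*z)) + (-(16) * (c1*g3*g3*cg1*z*z*z*z*z)) + (-(3) * (c1*g2*cg1*z)) + (-(24) * (c1*g2*g3*cg1*z*z*z*z)) + (-(9) * (c1*g2*g2*cg1*z*z*z)) + (-(2) * (c1*g1*cg1)) + (-(16) * (c1*g1*g3*cg1*z*z*z)) + (-(12) * (c1*g1*g2*cg1*z*z)) + (-(4) * (c1*g1*g1*cg1*z)))%C.
Definition ND (c1 g1 g2 g3 cg1 cg2 cg3 z zb : CC) : CC := ((-(1) * (c1*cg3*zb)) + (-(1) * (c1*cg2)) + (-(8) * (c1*g3*cg3*z*z*z*zb)) + (-(8) * (c1*g3*cg2*z*z*z)) + (-(16) * (c1*g3*g3*cg3*z*z*z*z*z*z*zb)) + (-(16) * (c1*g3*g3*cg2*z*z*z*z*z*z)) + (-(6) * (c1*g2*cg3*z*z*zb)) + (-(6) * (c1*g2*cg2*z*z)) + (-(24) * (c1*g2*g3*cg3*z*z*z*z*z*zb)) + (-(24) * (c1*g2*g3*cg2*z*z*z*z*z)) + (-(9) * (c1*g2*g2*cg3*z*z*z*z*zb)) + (-(9) * (c1*g2*g2*cg2*z*z*z*z)) + (-(4) * (c1*g1*cg3*z*zb)) + (-(4) * (c1*g1*cg2*z)) + (-(16) * (c1*g1*g3*cg3*z*z*z*z*zb)) + (-(16) * (c1*g1*g3*cg2*z*z*z*z)) + (-(12) * (c1*g1*g2*cg3*z*z*z*zb)) + (-(12)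 * (c1*g1*g2*cg2*z*z*z)) + (-(4) * (c1*g1*g1*cg3*z*z*zb)) + (-(4) * (c1*g1*g1*cg2*z*z)))%C.

Require Import Defs.
From Stdlib Require Import Reals Lra.
From Coquelicot Require Import Coquelicot.
Open Scope R_scope.
Open Scope C_scope.
Definition wm (g1 g2 g3 z : CC) : CC := z + g1 * (z * z) + g2 * (z * z * z) + g3 * (z * z * z * z).
Definition wp (g1 g2 g3 z : CC) : CC := 1 + 2 * g1 * z + 3 * g2 * (z * z) + 4 * g3 * (z * z * z).
Definition wpp (g1 g2 g3 z : CC) : CC := 2 * g1 + 6 * g2 * z + 12 * g3 * (z * z).
Definition Pp (c0 c1 c2 c3 c4 c5 z : CC) : CC :=
  c0 + c1 * Cconj z + c2 * z + c3 * (z * z) + c4 * (Cconj z * Cconj z) + c5 * (z * Cconj z).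
Definition Nf c0 c1 c2 c3 c4 c5 g1 g2 g3 z :=
  wp g1 g2 g3 z * Pp c0 c1 c2 c3 c4 c5 z + wpp g1 g2 g3 z - c1 * Cconj (wm g1 g2 g3 z) * (wp g1 g2 g3 z * wp g1 g2 g3 z).

Lemma Nf_decomp c0 c1 c2 c3 c4 c5 g1 g2 g3 :
  g1 = - c0 / 2 ->
  c2 + 2 * g1 * c0 + 6 * g2 = 0 ->
  12 * g3 + c3 + 2 * g1 * c2 + 3 * g2 * c0 = 0 ->
  c5 - 2 * g1 * c1 = 0 ->
  c4 - c1 * Cconj g1 = 0 ->
  forall z, Nf c0 c1 c2 c3 c4 c5 g1 g2 g3 z =
   let zb := Cconj z in let cg1 := Cconj g1 in let cg2 := Cconj g2 in let cg3 := Cconj g3 in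
   z*z*z * NA c1 g1 g2 g3 cg1 cg2 cg3 z zb + z*z*zb * NB c1 g1 g2 g3 cg1 cg2 cg3 z zb
   + z*zb*zb * NCc c1 g1 g2 g3 cg1 cg2 cg3 z zb + zb*zb*zb * ND c1 g1 g2 g3 cg1 cg2 cg3 z zb.
Proof.
  intros Hg1 H2 H3 H5 H4 z.
  assert (E0 : c0 = -2 * g1) by (rewrite Hg1; field).
  assert (E2 : c2 = - 2 * g1 * c0 - 6 * g2).
  { replace c2 with (c2 + 2 * g1 * c0 + 6 * g2 - 2 * g1 * c0 - 6 * g2) by ring. rewrite H2. ring. }
  assert (E3 : c3 = - 12 * g3 - 2 * g1 * c2 - 3 * g2 * c0).
  { replace c3 with (12 * g3 + c3 + 2 * g1 * c2 + 3 * g2 * c0 - 12 * g3 - 2 * g1 * c2 - 3 * g2 * c0) by ring. rewrite H3. ring. }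
  assert (E5 : c5 = 2 * g1 * c1).
  { replace c5 with (c5 - 2 * g1 * c1 + 2 * g1 * c1) by ring. rewrite H5. ring. }
  assert (E4 : c4 = c1 * Cconj g1).
  { replace c4 with (c4 - c1 * Cconj g1 + c1 * Cconj g1) by ring. rewrite H4. ring. }
  rewrite E3, E2, E5, E4, E0. clear.
  unfold Nf, wm, wp, wpp, Pp, NA, NB, NCc, ND; cbv zeta.
  rewrite !Cplus_conj, !Cmult_conj. ring.
Qed.

Ltac bnd := repeat (apply Bnd_plus || apply Bnd_mult || apply Bnd_id || apply Bnd_conj || apply Bnd_const).

Lemma Nf_O3 c0 c1 c2 c3 c4 c5 g1 g2 g3 :
  g1 = - c0 / 2 ->
  c2 + 2 * g1 * c0 + 6 * g2 = 0 ->
  12 * g3 + c3 + 2 * g1 * c2 + 3 * g2 * c0 = 0 ->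
  c5 - 2 * g1 * c1 = 0 ->
  c4 - c1 * Cconj g1 = 0 ->
  O3 (Nf c0 c1 c2 c3 c4 c5 g1 g2 g3).
Proof.
  intros. eapply O3_ext. intro z. symmetry. apply Nf_decomp; auto. cbv zeta.
  repeat apply O3_plus; apply O3_mult;
   try (apply O3_mono; intro; first [apply Cmod_id | apply Cmod_cj]);
   unfold NA, NB, NCc, ND; bnd.
Qed.

Open Scope R_scope.
Lemma small1 q : Bnd q -> exists d, 0 < d /\ forall z, Cmod z < d -> Cmod (z * q z) <= / 2.
Proof.
  intros [M [d0 [Hd0 B]]].
  assert (HM : 0 < 2 * (Rabs M + 1)) by (pose proof (Rabs_pos M); lra).
  exists (Rmin d0 (/ (2 * (Rabs M + 1)))). split. apply Rmin_pos; auto. apply Rinv_0_lt_compat; auto.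
  intros z Hz. rewrite Cmod_mult.
  assert (Cmod z < d0) by (eapply Rlt_le_trans; [apply Hz| apply Rmin_l]).
  assert (H1: Cmod z < / (2 * (Rabs M + 1))) by (eapply Rlt_le_trans; [apply Hz| apply Rmin_r]).
  specialize (B z H). pose proof (Cmod_ge_0 z). pose proof (Cmod_ge_0 (q z)).
  assert (Cmod (q z) <= Rabs M + 1) by (pose proof (Rle_abs M); lra).
  apply Rle_trans with (Cmod z * (Rabs M + 1)). apply Rmult_le_compat_l; lra.
  apply Rmult_lt_compat_r with (r := 2 * (Rabs M + 1)) in H1; [|lra].
  rewrite Rinv_l in H1 by lra. lra.
Qed.

Lemma lt_min x a b : x < Rmin a b -> x < a /\ x < b.
Proof. intros H; split; (eapply Rlt_le_trans; [apply H|]); [apply Rmin_l|apply Rmin_r]. Qed.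

Definition Ef (m : CC -> CC) c1 g1 g2 g3 (z : CC) : CC :=
  ((wp g1 g2 g3 z * m z + wpp g1 g2 g3 z) / (wp g1 g2 g3 z * wp g1 g2 g3 z) - c1 * Cconj (wm g1 g2 g3 z))%C.

Lemma E_bound (m : CC -> CC) c0 c1 c2 c3 c4 c5 g1 g2 g3 :
  g1 = (- c0 / 2)%C ->
  (c2 + 2 * g1 * c0 + 6 * g2)%C = 0%C ->
  (12 * g3 + c3 + 2 * g1 * c2 + 3 * g2 * c0)%C = 0%C ->
  (c5 - 2 * g1 * c1)%C = 0%C ->
  (c4 - c1 * Cconj g1)%C = 0%C ->
  (exists K delta, 0 < delta /\ forall z : CC, Cmod z < delta ->
     Cmod (m z - Pp c0 c1 c2 c3 c4 c5 z)%C <= K * Cmod z ^ 3) ->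
  exists d K, 0 < d /\ (forall z, Cmod z < d -> wp g1 g2 g3 z <> 0%C) /\
    forall z, Cmod z < d -> Cmod (Ef m c1 g1 g2 g3 z) <= K * Cmod (wm g1 g2 g3 z) ^ 3.
Proof.
  intros Hg1 H2 H3 H5 H4 [K0 [d0 [Hd0 HK0]]].
  destruct (Nf_O3 c0 c1 c2 c3 c4 c5 g1 g2 g3 Hg1 H2 H3 H5 H4) as [KN [dN [HdN HKN]]].
  destruct (small1 (fun z => 2 * g1 + 3 * g2 * z + 4 * g3 * (z * z))%C) as [d1 [Hd1 S1]]. bnd.
  destruct (small1 (fun z => g1 + g2 * z + g3 * (z * z))%C) as [d2 [Hd2 S2]]. bnd.
  set (d := Rmin (Rmin d0 dN) (Rmin d1 d2)).
  assert (Hd : 0 < d) by (unfold d; repeat apply Rmin_pos; auto).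
  assert (L0 : forall z, Cmod z < d -> Cmod z < d0 /\ Cmod z < dN /\ Cmod z < d1 /\ Cmod z < d2).
  { intros z Hz. unfold d in Hz. apply lt_min in Hz. destruct Hz as [Ha Hb].
    apply lt_min in Ha. apply lt_min in Hb. tauto. }
  assert (Wp : forall z, Cmod z < d -> / 2 <= Cmod (wp g1 g2 g3 z)).
  { intros z Hz. destruct (L0 z Hz) as [_ [_ [Hz1 _]]]. specialize (S1 z Hz1).
    replace (wp g1 g2 g3 z) with (1 - (- (z * (2 * g1 + 3 * g2 * z + 4 * g3 * (z * z)))))%C
      by (unfold wp; ring).
    pose proof (Cmod_triangle (1 - - (z * (2 * g1 + 3 * g2 * z + 4 * g3 * (z * z))))%C
       (- (z * (2 * g1 + 3 * g2 * z + 4 * g3 * (z * z))))%C).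
    replace (1 - - (z * (2 * g1 + 3 * g2 * z + 4 * g3 * (z * z))) + - (z * (2 * g1 + 3 * g2 * z + 4 * g3 * (z * z))))%C with (RtoC 1) in H by ring.
    rewrite Cmod_opp in H. rewrite Cmod_R, Rabs_R1 in H. lra. }
  assert (Wm : forall z, Cmod z < d -> Cmod z <= 2 * Cmod (wm g1 g2 g3 z)).
  { intros z Hz. destruct (L0 z Hz) as [_ [_ [_ Hz2]]]. specialize (S2 z Hz2).
    pose proof (Cmod_triangle (wm g1 g2 g3 z) (- (z * (z * (g1 + g2 * z + g3 * (z * z)))))%C).
    replace (wm g1 g2 g3 z + - (z * (z * (g1 + g2 * z + g3 * (z * z)))))%C with z in H by (unfold wm; ring).
    rewrite Cmod_opp, Cmod_mult in H.
    pose proof (Cmod_ge_0 z).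
    assert (Cmod z * Cmod (z * (g1 + g2 * z + g3 * (z * z))) <= Cmod z * / 2) by (apply Rmult_le_compat_l; lra).
    lra. }
  exists d, ((4 * Rabs KN + 2 * Rabs K0) * 8). split; auto. split.
  { intros z Hz Hw. specialize (Wp z Hz). rewrite Hw, Cmod_0 in Wp. lra. }
  intros z Hz. destruct (L0 z Hz) as [Hz0 [HzN _]].
  specialize (Wp z Hz). specialize (Wm z Hz).
  assert (Hw : wp g1 g2 g3 z <> 0%C) by (intro Hw; rewrite Hw, Cmod_0 in Wp; lra).
  replace (Ef m c1 g1 g2 g3 z) with
    (Nf c0 c1 c2 c3 c4 c5 g1 g2 g3 z * (/ wp g1 g2 g3 z * / wp g1 g2 g3 z) + (m z - Pp c0 c1 c2 c3 c4 c5 z) * / wp g1 g2 g3 z)%C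
    by (unfold Ef, Nf; field; auto).
  eapply Rle_trans. apply Cmod_triangle. rewrite !Cmod_mult, !Cmod_inv by auto.
  specialize (HKN z HzN). specialize (HK0 z Hz0).
  assert (Iw : / Cmod (wp g1 g2 g3 z) <= 2).
  { replace 2 with (/ / 2) by field. apply Rinv_le_contravar; lra. }
  assert (Iw0 : 0 <= / Cmod (wp g1 g2 g3 z)) by (apply Rlt_le, Rinv_0_lt_compat; lra).
  pose proof (Cmod_ge_0 z). pose proof (Cmod_ge_0 (wm g1 g2 g3 z)).
  assert (Z3 : Cmod z ^ 3 <= 8 * Cmod (wm g1 g2 g3 z) ^ 3).
  { replace (8 * Cmod (wm g1 g2 g3 z) ^ 3) with ((2 * Cmod (wm g1 g2 g3 z)) ^ 3) by ring.
    apply pow_incr; lra. }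
  assert (P3 : 0 <= Cmod z ^ 3) by (apply pow_le; lra).
  assert (A1 : Cmod (Nf c0 c1 c2 c3 c4 c5 g1 g2 g3 z) <= Rabs KN * Cmod z ^ 3).
  { eapply Rle_trans. apply HKN. apply Rmult_le_compat_r; auto. apply Rle_abs. }
  assert (A2 : Cmod (m z - Pp c0 c1 c2 c3 c4 c5 z) <= Rabs K0 * Cmod z ^ 3).
  { eapply Rle_trans. apply HK0. apply Rmult_le_compat_r; auto. apply Rle_abs. }
  pose proof (Rabs_pos KN). pose proof (Rabs_pos K0).
  set (X := Cmod z ^ 3) in *. set (I := / Cmod (wp g1 g2 g3 z)) in *.
  set (Y := Cmod (wm g1 g2 g3 z) ^ 3) in *.
  apply Rle_trans with (Rabs KN * X * (I * I) + Rabs K0 * X * I).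
  { apply Rplus_le_compat. apply Rmult_le_compat_r. apply Rmult_le_pos; auto. auto.
    apply Rmult_le_compat_r; auto. }
  assert (I * I <= 4) by nra.
  assert (Rabs KN * X * (I * I) <= Rabs KN * X * 4) by (apply Rmult_le_compat_l; nra).
  assert (Rabs K0 * X * I <= Rabs K0 * X * 2) by (apply Rmult_le_compat_l; nra).
  assert ((4 * Rabs KN + 2 * Rabs K0) * X <= (4 * Rabs KN + 2 * Rabs K0) * (8 * Y)) by (apply Rmult_le_compat_l; lra).
  lra.
Qed.

Open Scope R_scope.
Lemma rd_mult (f g : R -> R) t a b : is_derive f t a -> is_derive g t b -> is_derive (fun s => f s * g s) t (a * g t + f t * b).
Proof. intros. apply (is_derive_mult f g); auto. intros; apply Rmult_comm. Qed.
Lemma rd_plus (f g : R -> R) t a b : is_derive f t a -> is_derive g t b -> is_derive (fun s => f s + g s) t (a + b).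
Proof. intros. apply (is_derive_plus f g); auto. Qed.
Lemma rd_minus (f g : R -> R) t a b : is_derive f t a -> is_derive g t b -> is_derive (fun s => f s - g s) t (a - b).
Proof. intros. apply (is_derive_minus f g); auto. Qed.
Lemma rd_const (c : R) t : is_derive (fun _ => c) t 0.
Proof. exact (is_derive_const (K := R_AbsRing) c t). Qed.
Lemma rd_val (f : R -> R) t a b : is_derive f t a -> a = b -> is_derive f t b.
Proof. intros H ->; auto. Qed.

Definition cderiv (f : R -> CC) (t : R) (l : CC) :=
  is_derive (fun s => Re (f s)) t (Re l) /\ is_derive (fun s => Im (f s)) t (Im l).

Lemma cderiv_val f t l l' : cderiv f t l -> l = l' -> cderiv f t l'.
Proof. intros H ->; auto. Qed.

Lemma cderiv_const (c : CC) t : cderiv (fun _ => c) t 0%C.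
Proof. split; simpl; apply rd_const. Qed.

Lemma cderiv_plus f g t a b : cderiv f t a -> cderiv g t b -> cderiv (fun s => f s + g s)%C t (a + b)%C.
Proof.
  intros [Ha1 Ha2] [Hb1 Hb2]. split; simpl; apply rd_plus; auto.
Qed.

Lemma cderiv_mult f g t a b : cderiv f t a -> cderiv g t b -> cderiv (fun s => f s * g s)%C t (a * g t + f t * b)%C.
Proof.
  intros [Ha1 Ha2] [Hb1 Hb2]. split; simpl.
  - eapply rd_val. apply rd_minus; apply rd_mult; eauto. simpl. unfold Re, Im. ring.
  - eapply rd_val. apply rd_plus; apply rd_mult; eauto. simpl. unfold Re, Im. ring.
Qed.

Ltac cdstep HZ := match goal with
 | |- cderiv (fun s => Cplus (@?f s) (@?g s)) _ _ => apply (cderiv_plus f g)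
 | |- cderiv (fun s => Cmult (@?f s) (@?g s)) _ _ => apply (cderiv_mult f g)
 | |- cderiv _ _ _ => first [exact HZ | apply cderiv_const]
 end.

Lemma cderiv_wm g1 g2 g3 Z t d : cderiv Z t d ->
  cderiv (fun s => wm g1 g2 g3 (Z s)) t (wp g1 g2 g3 (Z t) * d)%C.
Proof.
  intros HZ. unfold wm. eapply cderiv_val.
  repeat cdstep HZ.
  unfold wp. ring.
Qed.

Lemma cderiv_wp g1 g2 g3 Z t d : cderiv Z t d ->
  cderiv (fun s => wp g1 g2 g3 (Z s)) t (wpp g1 g2 g3 (Z t) * d)%C.
Proof.
  intros HZ. unfold wp. eapply cderiv_val.
  repeat cdstep HZ.
  unfold wpp. ring.
Qed.

Lemma cderiv_Derive f t l : cderiv f t l -> (Derive (fun s => Re (f s)) t, Derive (fun s => Im (f s)) t) = l.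
Proof. intros [H1 H2]. apply injective_projections; simpl; apply is_derive_unique; auto. Qed.

Open Scope R_scope.

Lemma loc_ball t0 x0 rho : 0 < rho -> locally x0 (fun x => inball t0 x0 rho t0 x).
Proof.
  intros Hr. exists (mkposreal rho Hr). intros y Hy.
  change (Rabs (y - x0) < rho) in Hy. unfold inball.
  apply Rabs_def2 in Hy. nra.
Qed.

Lemma cderiv_ex (f : R -> CC) t : ex_derive (fun s => Re (f s)) t -> ex_derive (fun s => Im (f s)) t ->
  cderiv f t (Derive (fun s => Re (f s)) t, Derive (fun s => Im (f s)) t).
Proof. intros; split; apply Derive_correct; auto. Qed.

Lemma SMF_transform (m : CC -> CC) c1 g1 g2 g3 (Z : fun2) t0 x0 rho :
  0 < rho -> smooth_on Z (inball t0 x0 rho) ->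
  (Ci * pd1 Z t0 x0 + pd2 (pd2 Z) t0 x0 = m (Z t0 x0) * (pd2 Z t0 x0 * pd2 Z t0 x0))%C ->
  wp g1 g2 g3 (Z t0 x0) <> 0%C ->
  let W := fun t x => wm g1 g2 g3 (Z t x) in
  (Ci * pd1 W t0 x0 + pd2 (pd2 W) t0 x0)%C =
  (c1 * Cconj (W t0 x0) * (pd2 W t0 x0 * pd2 W t0 x0)
   + Ef m c1 g1 g2 g3 (Z t0 x0) * (pd2 W t0 x0 * pd2 W t0 x0))%C.
Proof.
  intros Hr Hs HSMF Hwp W.
  destruct (Hs 2%nat) as [H1 [_ [H2b _]]].

  assert (Hin0 : inball t0 x0 rho t0 x0) by (unfold inball; nra).
  assert (E1 : pd1 W t0 x0 = (wp g1 g2 g3 (Z t0 x0) * pd1 Z t0 x0)%C).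
  { change (pd1 W t0 x0) with (Derive (fun t => Re (wm g1 g2 g3 (Z t x0))) t0, Derive (fun t => Im (wm g1 g2 g3 (Z t x0))) t0).
    apply (cderiv_Derive (fun t => wm g1 g2 g3 (Z t x0))).
    apply (cderiv_wm g1 g2 g3 (fun t => Z t x0)). destruct (H1 t0 x0 Hin0) as [_ [Ha [Hb _]]].
    split; apply Derive_correct; auto. }
  assert (E2 : forall x, inball t0 x0 rho t0 x -> pd2 W t0 x = (wp g1 g2 g3 (Z t0 x) * pd2 Z t0 x)%C).
  { intros x Hx. change (pd2 W t0 x) with (Derive (fun t => Re (wm g1 g2 g3 (Z t0 t))) x, Derive (fun t => Im (wm g1 g2 g3 (Z t0 t))) x).
    apply (cderiv_Derive (fun s => wm g1 g2 g3 (Z t0 s))).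
    apply (cderiv_wm g1 g2 g3 (fun s => Z t0 s)). destruct (H1 t0 x Hx) as [_ [_ [_ [Ha Hb]]]].
    split; apply Derive_correct; auto. }
  assert (E3 : pd2 (pd2 W) t0 x0 = (wpp g1 g2 g3 (Z t0 x0) * pd2 Z t0 x0 * pd2 Z t0 x0
                                   + wp g1 g2 g3 (Z t0 x0) * pd2 (pd2 Z) t0 x0)%C).
  { change (pd2 (pd2 W) t0 x0) with (Derive (fun t => Re (pd2 W t0 t)) x0, Derive (fun t => Im (pd2 W t0 t)) x0).
    rewrite (Derive_ext_loc (fun t => Re (pd2 W t0 t)) (fun t => Re (wp g1 g2 g3 (Z t0 t) * pd2 Z t0 t)%C)).
    rewrite (Derive_ext_loc (fun t => Im (pd2 W t0 t)) (fun t => Im (wp g1 g2 g3 (Z t0 t) * pd2 Z t0 t)%C)).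
    apply (cderiv_Derive (fun s => wp g1 g2 g3 (Z t0 s) * pd2 Z t0 s)%C).
    eapply cderiv_val. apply cderiv_mult. apply (cderiv_wp g1 g2 g3 (fun s => Z t0 s)).
    destruct (H1 t0 x0 Hin0) as [_ [_ [_ [Ha Hb]]]].
    apply (cderiv_ex (fun s => Z t0 s)); auto.
    destruct (H2b t0 x0 Hin0) as [_ [_ [_ [Ha Hb]]]].
    apply (cderiv_ex (fun s => pd2 Z t0 s)); auto.
    change (Derive (fun s : R => Re (Z t0 s)) x0, Derive (fun s : R => Im (Z t0 s)) x0) with (pd2 Z t0 x0).
    change (Derive (fun s : R => Re (pd2 Z t0 s)) x0, Derive (fun s : R => Im (pd2 Z t0 s)) x0) with (pd2 (pd2 Z) t0 x0).
    cbv beta. reflexivity.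
    all: eapply filter_imp; [| apply (loc_ball t0 x0 rho Hr)]; intros x Hx; rewrite E2; auto. }
  rewrite E1, E3, (E2 x0 Hin0).
  unfold W. unfold Ef.
  replace (Ci * (wp g1 g2 g3 (Z t0 x0) * pd1 Z t0 x0) +
   (wpp g1 g2 g3 (Z t0 x0) * pd2 Z t0 x0 * pd2 Z t0 x0 + wp g1 g2 g3 (Z t0 x0) * pd2 (pd2 Z) t0 x0))%C
   with (wp g1 g2 g3 (Z t0 x0) * (Ci * pd1 Z t0 x0 + pd2 (pd2 Z) t0 x0) + wpp g1 g2 g3 (Z t0 x0) * pd2 Z t0 x0 * pd2 Z t0 x0)%C by ring.
  rewrite HSMF. field. auto.
Qed.

Open Scope R_scope.

Definition openU (U : R -> R -> Prop) := forall x y, U x y -> locally_2d U x y.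
Definition EXD n (f : R -> R -> R) (U : R -> R -> Prop) := forall x y, U x y -> ex_diff_n f n x y.

Lemma loc_U (U : R -> R -> Prop) (P : R -> R -> Prop) x y :
  openU U -> U x y -> (forall a b, U a b -> P a b) -> locally_2d P x y.
Proof. intros HU Hxy H. destruct (HU x y Hxy) as [d Hd]. exists d. intros; apply H, Hd; auto. Qed.

Lemma EXD_D1 n f U : EXD (S n) f U -> EXD n (fun u v => Derive (fun z => f z v) u) U.
Proof. intros H x y Hxy. apply ex_diff_n_deriv_aux1. auto. Qed.
Lemma EXD_D2 n f U : EXD (S n) f U -> EXD n (fun u v => Derive (fun z => f u z) v) U.
Proof. intros H x y Hxy. apply ex_diff_n_deriv_aux2. auto. Qed.
Lemma EXD_m n m f U : (m <= n)%nat -> EXD n f U -> EXD m f U.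
Proof. intros Hm H x y Hxy. eapply ex_diff_n_m; eauto. Qed.
Lemma EXD_ex1 n f U x y : EXD (S n) f U -> U x y -> ex_derive (fun z => f z y) x.
Proof. intros H Hxy. destruct (H x y Hxy) as [_ [H1 _]]. exact H1. Qed.
Lemma EXD_ex2 n f U x y : EXD (S n) f U -> U x y -> ex_derive (fun z => f x z) y.
Proof. intros H Hxy. destruct (H x y Hxy) as [_ [_ [H1 _]]]. exact H1. Qed.
Lemma EXD_cont n f U x y : EXD n f U -> U x y -> continuity_2d_pt f x y.
Proof. intros H Hxy. destruct n; destruct (H x y Hxy); auto. Qed.

Lemma EXD_ext n f g U : (forall x y, f x y = g x y) -> EXD n f U -> EXD n g U.
Proof.
  intros E H x y Hxy. apply ex_diff_n_ext_loc with f; auto.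
  exists (mkposreal 1 Rlt_0_1). intros; auto.
Qed.

Ltac toEXD U Hxy := match goal with |- ex_diff_n ?F ?n ?x ?y => cut (EXD n F U); [intros HH; apply HH; exact Hxy|] end.

Lemma EXD_const n c U : openU U -> EXD n (fun _ _ => c) U.
Proof.
  revert c. induction n; intros c HU x y Hxy.
  - split; [apply continuity_2d_pt_const | exact I].
  - split; [apply continuity_2d_pt_const|]. split; [apply ex_derive_const|].
    split; [apply ex_derive_const|]. split.
    + apply ex_diff_n_ext_loc with (fun _ _ => 0). exists (mkposreal 1 Rlt_0_1).
      intros; rewrite Derive_const; auto. toEXD U Hxy. apply IHn; auto.
    + apply ex_diff_n_ext_loc with (fun _ _ => 0). exists (mkposreal 1 Rlt_0_1).
      intros; rewrite Derive_const; auto. toEXD U Hxy. apply IHn; auto.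
Qed.

Lemma EXD_plus n : forall f g U, openU U -> EXD n f U -> EXD n g U -> EXD n (fun a b => f a b + g a b) U.
Proof.
  induction n; intros f g U HU Hf Hg x y Hxy.
  - split; [apply continuity_2d_pt_plus; eapply EXD_cont; eauto | exact I].
  - split; [apply continuity_2d_pt_plus; eapply EXD_cont; eauto|].
    split; [apply (ex_derive_plus (fun z => f z y) (fun z => g z y)); eapply EXD_ex1; eauto|].
    split; [apply (ex_derive_plus (fun z => f x z) (fun z => g x z)); eapply EXD_ex2; eauto|].
    split.
    + apply ex_diff_n_ext_loc with (fun u v => Derive (fun z => f z v) u + Derive (fun z => g z v) u).
      apply (loc_U U); auto. intros a b Hab. rewrite Derive_plus; auto; eapply EXD_ex1; eauto.
      toEXD U Hxy. apply IHn; auto; apply EXD_D1; auto.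
    + apply ex_diff_n_ext_loc with (fun u v => Derive (fun z => f u z) v + Derive (fun z => g u z) v).
      apply (loc_U U); auto. intros a b Hab. rewrite Derive_plus; auto; eapply EXD_ex2; eauto.
      toEXD U Hxy. apply IHn; auto; apply EXD_D2; auto.
Qed.

Lemma EXD_mult n : forall f g U, openU U -> EXD n f U -> EXD n g U -> EXD n (fun a b => f a b * g a b) U.
Proof.
  induction n; intros f g U HU Hf Hg x y Hxy.
  - split; [apply continuity_2d_pt_mult; eapply EXD_cont; eauto | exact I].
  - split; [apply continuity_2d_pt_mult; eapply EXD_cont; eauto|].
    split; [apply (ex_derive_mult (fun z => f z y) (fun z => g z y)); eapply EXD_ex1; eauto|].
    split; [apply (ex_derive_mult (fun z => f x z) (fun z => g x z)); eapply EXD_ex2; eauto|].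
    split.
    + apply ex_diff_n_ext_loc with (fun u v => Derive (fun z => f z v) u * g u v + f u v * Derive (fun z => g z v) u).
      apply (loc_U U); auto. intros a b Hab. rewrite Derive_mult; auto; eapply EXD_ex1; eauto.
      toEXD U Hxy. apply EXD_plus; auto; apply IHn; auto; try (apply EXD_D1; auto); apply (EXD_m (S n)); auto.
    + apply ex_diff_n_ext_loc with (fun u v => Derive (fun z => f u z) v * g u v + f u v * Derive (fun z => g u z) v).
      apply (loc_U U); auto. intros a b Hab. rewrite Derive_mult; auto; eapply EXD_ex2; eauto.
      toEXD U Hxy. apply EXD_plus; auto; apply IHn; auto; try (apply EXD_D2; auto); apply (EXD_m (S n)); auto.
Qed.

Lemma EXD_inv n : forall g U, openU U -> EXD n g U -> (forall a b, U a b -> g a b <> 0) ->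
  EXD n (fun a b => / g a b) U.
Proof.
  induction n; intros g U HU Hg Hnz x y Hxy.
  - split; [apply continuity_2d_pt_inv; [eapply EXD_cont; eauto| auto] | exact I].
  - split; [apply continuity_2d_pt_inv; [eapply EXD_cont; eauto| auto]|].
    split; [apply (ex_derive_inv (fun z => g z y)); [eapply EXD_ex1; eauto| auto]|].
    split; [apply (ex_derive_inv (fun z => g x z)); [eapply EXD_ex2; eauto| auto]|].
    split.
    + apply ex_diff_n_ext_loc with (fun u v => (-1 * Derive (fun z => g z v) u) * (/ g u v * / g u v)).
      apply (loc_U U); auto. intros a b Hab. rewrite Derive_inv; [field; auto | eapply EXD_ex1; eauto | auto].
      toEXD U Hxy. apply EXD_mult; auto. apply EXD_mult; auto. apply EXD_const; auto. apply EXD_D1; auto.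
      apply EXD_mult; auto; apply IHn; auto; apply (EXD_m (S n)); auto.
    + apply ex_diff_n_ext_loc with (fun u v => (-1 * Derive (fun z => g u z) v) * (/ g u v * / g u v)).
      apply (loc_U U); auto. intros a b Hab. rewrite Derive_inv; [change (Derive (g a) b) with (Derive (fun z => g a z) b); field; auto | eapply EXD_ex2; eauto | auto].
      toEXD U Hxy. apply EXD_mult; auto. apply EXD_mult; auto. apply EXD_const; auto. apply EXD_D2; auto.
      apply EXD_mult; auto; apply IHn; auto; apply (EXD_m (S n)); auto.
Qed.

Lemma cont_ln x : 0 < x -> continuity_pt ln x.
Proof. intros H. apply continuity_pt_filterlim. apply (ex_derive_continuous ln). exists (/ x). apply is_derive_ln; auto. Qed.

Lemma Derive_ln_comp (f : R -> R) x : ex_derive f x -> 0 < f x -> Derive (fun z => ln (f z)) x = Derive f x * / f x.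
Proof.
  intros H Hp. rewrite Derive_comp; auto. f_equal. apply is_derive_unique. apply is_derive_ln; auto.
  exists (/ f x). apply is_derive_ln; auto.
Qed.

Lemma ex_derive_ln_comp (f : R -> R) x : ex_derive f x -> 0 < f x -> ex_derive (fun z => ln (f z)) x.
Proof. intros H Hp. apply (ex_derive_comp ln f); auto. exists (/ f x). apply is_derive_ln; auto. Qed.

Lemma EXD_ln n g U : openU U -> EXD n g U -> (forall a b, U a b -> 0 < g a b) ->
  EXD n (fun a b => ln (g a b)) U.
Proof.
  intros HU Hg Hp. destruct n; intros x y Hxy.
  - split; [apply continuity_1d_2d_pt_comp; [apply cont_ln; auto| eapply EXD_cont; eauto] | exact I].
  - split; [apply continuity_1d_2d_pt_comp; [apply cont_ln; auto| eapply EXD_cont; eauto]|].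
    split; [apply (ex_derive_ln_comp (fun z => g z y)); [eapply EXD_ex1; eauto| auto]|].
    split; [apply (ex_derive_ln_comp (fun z => g x z)); [eapply EXD_ex2; eauto| auto]|].
    assert (Hnz : forall a b, U a b -> g a b <> 0) by (intros a b Hab; specialize (Hp a b Hab); lra).
    split.
    + apply ex_diff_n_ext_loc with (fun u v => Derive (fun z => g z v) u * / g u v).
      apply (loc_U U); auto. intros a b Hab. rewrite Derive_ln_comp; auto. eapply EXD_ex1; eauto.
      toEXD U Hxy. apply EXD_mult; auto. apply EXD_D1; auto. apply EXD_inv; auto. apply (EXD_m (S n)); auto.
    + apply ex_diff_n_ext_loc with (fun u v => Derive (fun z => g u z) v * / g u v).
      apply (loc_U U); auto. intros a b Hab. rewrite Derive_ln_comp; auto. eapply EXD_ex2; eauto.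
      toEXD U Hxy. apply EXD_mult; auto. apply EXD_D2; auto. apply EXD_inv; auto. apply (EXD_m (S n)); auto.
Qed.

Lemma cont_Re (g : fun2) a b : continuous (fun p : R * R => g (fst p) (snd p)) (a, b) ->
  continuity_2d_pt (fun x y => Re (g x y)) a b.
Proof.
  intros H. apply continuity_2d_pt_filterlim.
  apply (filterlim_comp _ _ _ (fun p : R * R => g (fst p) (snd p)) (fun c : CC => Re c) _ _ _ H).
  intros P [eps HP]. exists eps. intros c Hc. apply HP. destruct Hc as [H1 H2]. exact H1.
Qed.

Lemma Ck_exd n : forall (g : fun2) U, Ck n g U -> forall a b, U a b -> ex_diff_n (fun x y => Re (g x y)) n a b.
Proof.
  induction n; intros g U H a b Hab.
  - split; [apply cont_Re; apply H; auto| exact I].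
  - destruct H as [H0 [H1 H2]]. destruct (H0 a b Hab) as [Hc [Ha [_ [Hb _]]]].
    split; [apply cont_Re; auto|]. split; [exact Ha|]. split; [exact Hb|]. split.
    + exact (IHn (pd1 g) U H1 a b Hab).
    + exact (IHn (pd2 g) U H2 a b Hab).
Qed.

Definition sq (d x y : R) : Prop := Rabs x < d /\ Rabs y < d.

Lemma sq_open d : openU (sq d).
Proof.
  intros x y [Hx Hy]. 
  assert (Hp : 0 < d - Rmax (Rabs x) (Rabs y)) by (apply Rmax_case; lra).
  exists (mkposreal _ Hp). simpl. intros u v Hu Hv. split.
  - pose proof (Rabs_triang_inv u x). pose proof (Rmax_l (Rabs x) (Rabs y)). 
    assert (Rabs u <= Rabs (u - x) + Rabs x) by (replace u with ((u - x) + x) at 1 by ring; apply Rabs_triang).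
    lra.
  - pose proof (Rmax_r (Rabs x) (Rabs y)).
    assert (Rabs v <= Rabs (v - y) + Rabs y) by (replace v with ((v - y) + y) at 1 by ring; apply Rabs_triang).
    lra.
Qed.

Lemma sq_ball r x y : 0 < r -> sq (r / 2) x y -> inball 0 0 r x y.
Proof.
  intros Hr [Hx Hy]. unfold inball.
  apply Rabs_def2 in Hx. apply Rabs_def2 in Hy. nra.
Qed.

Lemma sq_0 d : 0 < d -> sq d 0 0.
Proof. intros; split; rewrite Rabs_R0; auto. Qed.

Lemma small_zero a K d : 0 < d -> (forall s, 0 < s < d -> Rabs a <= K * s) -> a = 0.
Proof.
  intros Hd H. destruct (Req_dec a 0) as [|Ha]; auto. exfalso.
  assert (Hpa : 0 < Rabs a) by (apply Rabs_pos_lt; auto).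
  set (s := Rmin (d / 2) (Rabs a / (2 * (Rabs K + 1)))).
  assert (HK : 0 < Rabs K + 1) by (pose proof (Rabs_pos K); lra).
  assert (Hs0 : 0 < s) by (unfold s; apply Rmin_pos; [lra| apply Rdiv_lt_0_compat; lra]).
  assert (Hs1 : s < d) by (unfold s; pose proof (Rmin_l (d/2) (Rabs a / (2 * (Rabs K + 1)))); lra).
  assert (Hs2 : s <= Rabs a / (2 * (Rabs K + 1))) by apply Rmin_r.
  specialize (H s (conj Hs0 Hs1)).
  assert (K * s <= (Rabs K + 1) * s) by (apply Rmult_le_compat_r; [lra| pose proof (Rle_abs K); lra]).
  assert ((Rabs K + 1) * s <= Rabs a / 2).
  { apply Rmult_le_compat_l with (r := Rabs K + 1) in Hs2; [|lra].
    replace ((Rabs K + 1) * (Rabs a / (2 * (Rabs K + 1)))) with (Rabs a / 2) in Hs2 by (field; lra). lra. }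
  lra.
Qed.

Lemma poly1_zero (al be ga M d : R) : 0 < d ->
  (forall s, Rabs s < d -> Rabs (al + be * s + ga * s ^ 2) <= M * Rabs s ^ 3) ->
  al = 0 /\ be = 0 /\ ga = 0.
Proof.
  intros Hd H.
  assert (Ha : al = 0).
  { specialize (H 0). rewrite Rabs_R0 in H. specialize (H Hd).
    replace (al + be * 0 + ga * 0 ^ 2) with al in H by ring.
    replace (M * 0 ^ 3) with 0 in H by ring. pose proof (Rabs_pos al).
    apply Rabs_eq_0. lra. }
  subst al.
  assert (Hb : be = 0).
  { apply (small_zero be (Rabs ga + Rabs M * d) d Hd). intros s [Hs0 Hs1].
    assert (Has : Rabs s < d) by (rewrite Rabs_pos_eq; lra).
    specialize (H s Has). rewrite (Rabs_pos_eq s) in H by lra.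
    replace (0 + be * s + ga * s ^ 2) with (s * (be + ga * s)) in H by ring.
    rewrite Rabs_mult, Rabs_pos_eq in H by lra.
    assert (Rabs (be + ga * s) <= M * s ^ 2).
    { apply Rmult_le_reg_l with s; auto. replace (s * (M * s ^ 2)) with (M * s ^ 3) by ring. auto. }
    pose proof (Rabs_triang (be + ga * s) (- (ga * s))).
    replace (be + ga * s + - (ga * s)) with be in H1 by ring.
    rewrite Rabs_Ropp, Rabs_mult, (Rabs_pos_eq s) in H1 by lra.
    assert (M * s ^ 2 <= Rabs M * d * s).
    { replace (M * s ^ 2) with ((M * s) * s) by ring. apply Rmult_le_compat_r; [lra|].
      pose proof (Rle_abs M). pose proof (Rabs_pos M).
      apply Rle_trans with (Rabs M * s); [apply Rmult_le_compat_r; lra | apply Rmult_le_compat_l; lra]. }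
    nra. }
  subst be. split; auto. split; auto.
  apply (small_zero ga (Rabs M) d Hd). intros s [Hs0 Hs1].
  assert (Has : Rabs s < d) by (rewrite Rabs_pos_eq; lra).
  specialize (H s Has). rewrite (Rabs_pos_eq s) in H by lra.
  replace (0 + 0 * s + ga * s ^ 2) with (ga * s ^ 2) in H by ring.
  rewrite Rabs_mult, (Rabs_pos_eq (s ^ 2)) in H by (apply pow_le; lra).
  apply Rmult_le_reg_r with (s ^ 2). apply pow_lt; lra.
  replace (Rabs M * s * s ^ 2) with (Rabs M * s ^ 3) by ring.
  eapply Rle_trans. apply H. apply Rmult_le_compat_r. apply pow_le; lra. apply Rle_abs.
Qed.

Lemma poly2_zero (A B C D E F M d : R) : 0 < d ->
  (forall u v, Rabs u < d -> Rabs v < d ->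
     Rabs (A + B * u + C * v + D * u ^ 2 + E * (u * v) + F * v ^ 2) <= M * Rmax (Rabs u) (Rabs v) ^ 3) ->
  A = 0 /\ B = 0 /\ C = 0 /\ D = 0 /\ E = 0 /\ F = 0.
Proof.
  intros Hd H.
  assert (Hr0 : Rabs 0 < d) by (rewrite Rabs_R0; auto).
  destruct (poly1_zero A B D M d Hd) as [HA [HB HD]].
  { intros s Hs. specialize (H s 0 Hs Hr0). rewrite Rabs_R0 in H.
    rewrite Rmax_left in H by apply Rabs_pos.
    replace (A + B * s + D * s ^ 2) with (A + B * s + C * 0 + D * s ^ 2 + E * (s * 0) + F * 0 ^ 2) by ring. auto. }
  destruct (poly1_zero A C F M d Hd) as [_ [HC HF]].
  { intros s Hs. specialize (H 0 s Hr0 Hs). rewrite Rabs_R0 in H.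
    rewrite Rmax_right in H by apply Rabs_pos.
    replace (A + C * s + F * s ^ 2) with (A + B * 0 + C * s + D * 0 ^ 2 + E * (0 * s) + F * s ^ 2) by ring. auto. }
  subst.
  destruct (poly1_zero 0 0 E M d Hd) as [_ [_ HE]].
  { intros s Hs. specialize (H s s Hs Hs). rewrite Rmax_left in H by lra.
    replace (0 + 0 * s + E * s ^ 2) with (0 + 0 * s + 0 * s + 0 * s ^ 2 + E * (s * s) + 0 * s ^ 2) by ring. auto. }
  repeat split; auto.
Qed.

Lemma DL2_eq f x y dx dy : DL_pol 2 f x y dx dy =
  f x y + partial_derive 1 0 f x y * dx + partial_derive 0 1 f x y * dy
  + / 2 * partial_derive 2 0 f x y * dx ^ 2 + partial_derive 1 1 f x y * (dx * dy)
  + / 2 * partial_derive 0 2 f x y * dy ^ 2.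
Proof.
  unfold DL_pol, differential. simpl sum_f_R0. unfold Binomial.C. simpl.
  change (partial_derive 0 0 f x y) with (f x y). field.
Qed.

Lemma coeffs f A B C D E F : locally_2d (fun u v => ex_diff_n f 3 u v) 0 0 ->
 (exists M d, 0 < d /\ forall u v, Rabs u < d -> Rabs v < d ->
    Rabs (f u v - (A + B * u + C * v + D * u ^ 2 + E * (u * v) + F * v ^ 2)) <= M * Rmax (Rabs u) (Rabs v) ^ 3) ->
 f 0 0 = A /\ partial_derive 1 0 f 0 0 = B /\ partial_derive 0 1 f 0 0 = C /\
 partial_derive 2 0 f 0 0 = 2 * D /\ partial_derive 1 1 f 0 0 = E /\ partial_derive 0 2 f 0 0 = 2 * F.
Proof.
  intros Hl [M [d [Hd HM]]].
  destruct (Taylor_Lagrange_2d f 2 0 0 Hl) as [D' [d' HD']].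
  destruct (poly2_zero (f 0 0 - A) (partial_derive 1 0 f 0 0 - B) (partial_derive 0 1 f 0 0 - C)
     (/ 2 * partial_derive 2 0 f 0 0 - D) (partial_derive 1 1 f 0 0 - E) (/ 2 * partial_derive 0 2 f 0 0 - F)
     (D' + M) (Rmin d d')) as [H1 [H2 [H3 [H4 [H5 H6]]]]].
  { apply Rmin_pos; auto. apply cond_pos. }
  { intros u v Hu Hv.
    assert (Hu1 : Rabs u < d) by (eapply Rlt_le_trans; [apply Hu| apply Rmin_l]).
    assert (Hu2 : Rabs u < d') by (eapply Rlt_le_trans; [apply Hu| apply Rmin_r]).
    assert (Hv1 : Rabs v < d) by (eapply Rlt_le_trans; [apply Hv| apply Rmin_l]).
    assert (Hv2 : Rabs v < d') by (eapply Rlt_le_trans; [apply Hv| apply Rmin_r]).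
    specialize (HM u v Hu1 Hv1).
    assert (Hu2' : Rabs (u - 0) < d') by (rewrite Rminus_0_r; auto).
    assert (Hv2' : Rabs (v - 0) < d') by (rewrite Rminus_0_r; auto).
    specialize (HD' u v Hu2' Hv2'). rewrite !Rminus_0_r in HD'. rewrite DL2_eq in HD'.
    match goal with |- Rabs ?X <= _ => replace X with
      ((f u v - (A + B * u + C * v + D * u ^ 2 + E * (u * v) + F * v ^ 2)) -
       (f u v - (f 0 0 + partial_derive 1 0 f 0 0 * u + partial_derive 0 1 f 0 0 * v +
        / 2 * partial_derive 2 0 f 0 0 * u ^ 2 + partial_derive 1 1 f 0 0 * (u * v) +
        / 2 * partial_derive 0 2 f 0 0 * v ^ 2))) by ring end.
    eapply Rle_trans. apply Rabs_triang. rewrite Rabs_Ropp.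
    replace (S 2) with 3%nat in HD' by reflexivity. lra. }
  repeat split; lra.
Qed.

Lemma sqrt2_lt2 : sqrt 2 < 2.
Proof. pose proof Rlt_sqrt2_0. pose proof (sqrt_sqrt 2 ltac:(lra)). nra. Qed.

Lemma Cmod_le_max (z : CC) : Cmod z <= 2 * Rmax (Rabs (fst z)) (Rabs (snd z)).
Proof.
  eapply Rle_trans. apply Cmod_2Rmax. apply Rmult_le_compat_r.
  eapply Rle_trans; [apply Rabs_pos| apply Rmax_l]. left; apply sqrt2_lt2.
Qed.

Lemma Re_le (c : CC) : Rabs (fst c) <= Cmod c.
Proof. eapply Rle_trans; [apply Rmax_l| apply Rmax_Cmod]. Qed.
Lemma Im_le (c : CC) : Rabs (snd c) <= Cmod c.
Proof. eapply Rle_trans; [apply Rmax_r| apply Rmax_Cmod]. Qed.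

Lemma EqGr h x y : Re (dz (lnh h) x y) = / 2 * Derive (fun t => ln (h t y)) x.
Proof. unfold dz, pd1, pd2, lnh. simpl. rewrite !Derive_const. field. Qed.
Lemma EqGi h x y : Im (dz (lnh h) x y) = - / 2 * Derive (fun t => ln (h x t)) y.
Proof. unfold dz, pd1, pd2, lnh. simpl. rewrite !Derive_const. field. Qed.

Lemma ReP c0 c1 c2 c3 c4 c5 u v : Re (Pp c0 c1 c2 c3 c4 c5 (u, v)) =
  fst c0 + (fst c1 + fst c2) * u + (snd c1 - snd c2) * v + (fst c3 + fst c4 + fst c5) * u ^ 2
  + (2 * snd c4 - 2 * snd c3) * (u * v) + (fst c5 - fst c3 - fst c4) * v ^ 2.
Proof. unfold Pp. simpl. ring. Qed.
Lemma ImP c0 c1 c2 c3 c4 c5 u v : Im (Pp c0 c1 c2 c3 c4 c5 (u, v)) =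
  snd c0 + (snd c1 + snd c2) * u + (fst c2 - fst c1) * v + (snd c3 + snd c4 + snd c5) * u ^ 2
  + (2 * fst c3 - 2 * fst c4) * (u * v) + (snd c5 - snd c3 - snd c4) * v ^ 2.
Proof. unfold Pp. simpl. ring. Qed.

Lemma mhz_G h x y : ex_derive (fun t => h t y) x -> ex_derive (fun t => h x t) y -> 0 < h x y ->
  mhz h (@pair R R x y) = (- dz (lnh h) x y)%C.
Proof.
  intros H1 H2 Hp. unfold mhz, dz, pd1, pd2, lnh, cplx. simpl.
  rewrite !Derive_const.
  rewrite (Derive_ln_comp (fun t => h t y)), (Derive_ln_comp (fun t => h x t)); auto.
  apply injective_projections; simpl; field; lra.
Qed.

Lemma ReH (G : fun2) x y : Re (dzb G x y) =
  / 2 * (Derive (fun t => Re (G t y)) x - Derive (fun t => Im (G x t)) y).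
Proof. unfold dzb, pd1, pd2. simpl. field. Qed.
Lemma ImH (G : fun2) x y : Im (dzb G x y) =
  / 2 * (Derive (fun t => Im (G t y)) x + Derive (fun t => Re (G x t)) y).
Proof. unfold dzb, pd1, pd2. simpl. field. Qed.

Lemma bound_re (m p : CC) : Rabs (- Re m - - Re p) <= Cmod (m - p)%C.
Proof.
  replace (- Re m - - Re p) with (- fst (m - p)%C) by (destruct m, p; simpl; ring).
  rewrite Rabs_Ropp. apply Re_le.
Qed.
Lemma bound_im (m p : CC) : Rabs (- Im m - - Im p) <= Cmod (m - p)%C.
Proof.
  replace (- Im m - - Im p) with (- snd (m - p)%C) by (destruct m, p; simpl; ring).
  rewrite Rabs_Ropp. apply Im_le.
Qed.

Lemma schw f U x y : openU U -> EXD 2 f U -> U x y ->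
  Derive (fun z => Derive (fun t => f z t) y) x = Derive (fun z => Derive (fun t => f t z) x) y.
Proof.
  intros HU Hf Hxy. apply Schwarz.
  - apply (loc_U U); auto. intros a b Hab. repeat split.
    + eapply (EXD_ex1 1); eauto.
    + eapply (EXD_ex2 1); eauto.
    + eapply (EXD_ex1 0 (fun u v => Derive (fun z => f u z) v)); eauto. apply EXD_D2; auto.
    + eapply (EXD_ex2 0 (fun u v => Derive (fun z => f z v) u)); eauto. apply EXD_D1; auto.
  - eapply (EXD_cont 0). apply EXD_D1. apply EXD_D2. eauto. auto.
  - eapply (EXD_cont 0). apply EXD_D2. apply EXD_D1. eauto. auto.
Qed.

Lemma exp_transfer (h : R -> R -> R) (r : R) c0 c1 c2 c3 c4 c5 :
  0 < r ->
  (forall x y, sq (r / 2) x y -> ex_derive (fun t => h t y) x /\ ex_derive (fun t => h x t) y /\ 0 < h x y) ->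
  (exists K delta, 0 < delta /\ forall z : CC, Cmod z < delta ->
     Cmod (mhz h z - Pp c0 c1 c2 c3 c4 c5 z)%C <= K * Cmod z ^ 3) ->
  exists M d, 0 < d /\ forall u v, Rabs u < d -> Rabs v < d ->
    Rabs (Re (dz (lnh h) u v) - - Re (Pp c0 c1 c2 c3 c4 c5 (u, v))) <= M * Rmax (Rabs u) (Rabs v) ^ 3 /\
    Rabs (Im (dz (lnh h) u v) - - Im (Pp c0 c1 c2 c3 c4 c5 (u, v))) <= M * Rmax (Rabs u) (Rabs v) ^ 3.
Proof.
  intros Hr Hh [K [de [Hde HK]]].
  exists (8 * Rabs K), (Rmin (de / 2) (r / 2)). split. apply Rmin_pos; lra.
  intros u v Hu Hv.
  apply lt_min in Hu. apply lt_min in Hv. destruct Hu as [Hu1 Hu2]. destruct Hv as [Hv1 Hv2].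
  destruct (Hh u v (conj Hu2 Hv2)) as [H1 [H2 H3]].
  pose proof (mhz_G h u v H1 H2 H3) as Em.
  assert (Hc : Cmod (u, v) < de).
  { eapply Rle_lt_trans. apply Cmod_le_max. simpl. apply Rmax_case; lra. }
  specialize (HK (u, v) Hc).
  assert (Hmax : Cmod (u, v) ^ 3 <= 8 * Rmax (Rabs u) (Rabs v) ^ 3).
  { replace (8 * Rmax (Rabs u) (Rabs v) ^ 3) with ((2 * Rmax (Rabs u) (Rabs v)) ^ 3) by ring.
    apply pow_incr. split. apply Cmod_ge_0. apply (Cmod_le_max (u, v)). }
  assert (HK' : Cmod (mhz h (u, v) - Pp c0 c1 c2 c3 c4 c5 (u, v))%C <= 8 * Rabs K * Rmax (Rabs u) (Rabs v) ^ 3).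
  { eapply Rle_trans. apply HK. pose proof (pow_le (Cmod (u, v)) 3 (Cmod_ge_0 _)).
    apply Rle_trans with (Rabs K * Cmod (u, v) ^ 3). apply Rmult_le_compat_r; auto. apply Rle_abs.
    replace (8 * Rabs K * Rmax (Rabs u) (Rabs v) ^ 3) with (Rabs K * (8 * Rmax (Rabs u) (Rabs v) ^ 3)) by ring.
    apply Rmult_le_compat_l; auto. apply Rabs_pos. }
  assert (ER : Re (dz (lnh h) u v) = - Re (mhz h (u, v))) by (rewrite Em; simpl; ring).
  assert (EI : Im (dz (lnh h) u v) = - Im (mhz h (u, v))) by (rewrite Em; simpl; ring).
  rewrite ER, EI. split; (eapply Rle_trans; [apply bound_re || apply bound_im | exact HK']).
Qed.

Lemma ReDz (F : fun2) x y : Re (dz F x y) =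
  / 2 * (Derive (fun t => Re (F t y)) x + Derive (fun t => Im (F x t)) y).
Proof. unfold dz, pd1, pd2. simpl. field. Qed.
Lemma ImDz (F : fun2) x y : Im (dz F x y) =
  / 2 * (Derive (fun t => Im (F t y)) x - Derive (fun t => Re (F x t)) y).
Proof. unfold dz, pd1, pd2. simpl. field. Qed.

Lemma Dlin_minus (f g : R -> R) x : ex_derive f x -> ex_derive g x ->
  Derive (fun t => / 2 * (f t - g t)) x = / 2 * (Derive f x - Derive g x).
Proof. intros. rewrite Derive_scal, Derive_minus; auto. Qed.
Lemma Dlin_plus (f g : R -> R) x : ex_derive f x -> ex_derive g x ->
  Derive (fun t => / 2 * (f t + g t)) x = / 2 * (Derive f x + Derive g x).
Proof. intros. rewrite Derive_scal, Derive_plus; auto. Qed.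

Lemma loc1 U x y : openU U -> U x y -> locally x (fun t => U t y).
Proof.
  intros HU Hxy. destruct (HU x y Hxy) as [e He]. exists e. intros t Ht. apply He.
  exact Ht. rewrite Rminus_diag, Rabs_R0. apply cond_pos.
Qed.
Lemma loc2 U x y : openU U -> U x y -> locally y (fun t => U x t).
Proof.
  intros HU Hxy. destruct (HU x y Hxy) as [e He]. exists e. intros t Ht. apply He.
  rewrite Rminus_diag, Rabs_R0. apply cond_pos. exact Ht.
Qed.

Lemma cmul_comp (A B C : CC) : (A * B - C)%C = 0%C ->
  Re A * Re B - Im A * Im B - Re C = 0 /\ Re A * Im B + Im A * Re B - Im C = 0.
Proof.
  destruct A as [a1 a2], B as [b1 b2], C as [c1 c2]. intros H.
  pose proof (f_equal fst H) as H1. pose proof (f_equal snd H) as H2. simpl in H1, H2.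
  simpl. split; lra.
Qed.

Lemma partA (h : R -> R -> R) (r : R) c0 c1 c2 c3 c4 c5 :
  0 < r -> (forall x y, inball 0 0 r x y -> 0 < h x y) -> smooth_on (cplx h) (inball 0 0 r) ->
  intrinsic_vanishing h ->
  (exists K delta, 0 < delta /\ forall z : CC, Cmod z < delta ->
     Cmod (mhz h z - Pp c0 c1 c2 c3 c4 c5 z)%C <= K * Cmod z ^ 3) ->
  (c5 - 2 * (- c0 / 2) * c1)%C = 0%C /\ (c4 - c1 * Cconj (- c0 / 2))%C = 0%C.
Proof.
  intros Hr Hpos Hs HI Hexp.
  set (U := sq (r / 2)).
  assert (HU : openU U) by apply sq_open.
  assert (HU0 : U 0 0) by (apply sq_0; lra).
  assert (HposU : forall x y, U x y -> 0 < h x y) by (intros; apply Hpos; apply sq_ball; auto).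
  assert (Hh : forall n, EXD n h U).
  { intros n x y Hxy. exact (Ck_exd n (cplx h) (inball 0 0 r) (Hs n) x y (sq_ball r x y Hr Hxy)). }
  set (u := fun x y => ln (h x y)).
  assert (Hu : forall n, EXD n u U) by (intros; apply EXD_ln; auto).
  set (G := dz (lnh h)).
  set (Gr := fun x y => Re (G x y)). set (Gi := fun x y => Im (G x y)).
  assert (HGr : forall n, EXD n Gr U).
  { intros n. apply EXD_ext with (fun x y => / 2 * Derive (fun t => u t y) x).
    intros; unfold Gr, G; rewrite EqGr; reflexivity.
    apply EXD_mult; auto. apply EXD_const; auto. apply EXD_D1; auto. }
  assert (HGi : forall n, EXD n Gi U).
  { intros n. apply EXD_ext with (fun x y => - / 2 * Derive (fun t => u x t) y).
    intros; unfold Gi, G; rewrite EqGi; reflexivity.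
    apply EXD_mult; auto. apply EXD_const; auto. apply EXD_D2; auto. }
  assert (Hh2 : forall x y, sq (r / 2) x y -> ex_derive (fun t => h t y) x /\ ex_derive (fun t => h x t) y /\ 0 < h x y).
  { intros x y Hxy. split; [eapply (EXD_ex1 0); eauto | split; [eapply (EXD_ex2 0); eauto| auto]]. }
  destruct (exp_transfer h r c0 c1 c2 c3 c4 c5 Hr Hh2 Hexp) as [M [d [Hd Hb]]].
  assert (LGr : locally_2d (fun a b => ex_diff_n Gr 3 a b) 0 0) by (apply (loc_U U); auto; intros; apply HGr || apply HGi; auto).
  assert (LGi : locally_2d (fun a b => ex_diff_n Gi 3 a b) 0 0) by (apply (loc_U U); auto; intros; apply HGr || apply HGi; auto).
  assert (EGr : exists M d, 0 < d /\ forall a b, Rabs a < d -> Rabs b < d ->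
    Rabs (Gr a b - (- fst c0 + - (fst c1 + fst c2) * a + - (snd c1 - snd c2) * b + - (fst c3 + fst c4 + fst c5) * a ^ 2
     + - (2 * snd c4 - 2 * snd c3) * (a * b) + - (fst c5 - fst c3 - fst c4) * b ^ 2)) <= M * Rmax (Rabs a) (Rabs b) ^ 3).
  { exists M, d. split; auto. intros a b Ha Hb'. destruct (Hb a b Ha Hb') as [B1 _].
    rewrite ReP in B1. eapply Rle_trans; [|exact B1]. right. f_equal. unfold Gr, G. ring. }
  assert (EGi : exists M d, 0 < d /\ forall a b, Rabs a < d -> Rabs b < d ->
    Rabs (Gi a b - (- snd c0 + - (snd c1 + snd c2) * a + - (fst c2 - fst c1) * b + - (snd c3 + snd c4 + snd c5) * a ^ 2
     + - (2 * fst c3 - 2 * fst c4) * (a * b) + - (snd c5 - snd c3 - snd c4) * b ^ 2)) <= M * Rmax (Rabs a) (Rabs b) ^ 3).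
  { exists M, d. split; auto. intros a b Ha Hb'. destruct (Hb a b Ha Hb') as [_ B1].
    rewrite ImP in B1. eapply Rle_trans; [|exact B1]. right. f_equal. unfold Gi, G. ring. }
  destruct (coeffs _ _ _ _ _ _ _ LGr EGr) as [T0 [T1 [T2 [T3 [T4 T5]]]]].
  destruct (coeffs _ _ _ _ _ _ _ LGi EGi) as [S0 [S1 [S2 [S3 [S4 S5]]]]].
  assert (Hreal : forall x y, U x y -> Im (dzb G x y) = 0).
  { intros x y Hxy. rewrite ImH.
    rewrite (Derive_ext (fun t => Im (G t y)) (fun t => - / 2 * Derive (fun s => ln (h t s)) y))
      by (intros; unfold G; apply EqGi).
    rewrite (Derive_ext (fun t => Re (G x t)) (fun t => / 2 * Derive (fun s => ln (h s t)) x))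
      by (intros; unfold G; apply EqGr).
    rewrite !Derive_scal.
    pose proof (schw u U x y HU (Hu 2%nat) Hxy) as Hsw. unfold u in Hsw. rewrite Hsw. ring. }
  assert (XR1 : Derive (fun t => Re (dzb G t 0)) 0 = / 2 * (partial_derive 2 0 Gr 0 0 - partial_derive 1 1 Gi 0 0)).
  { rewrite (Derive_ext _ (fun t => / 2 * (Derive (fun s => Gr s 0) t - Derive (fun s => Gi t s) 0))) by (intros; apply ReH).
    rewrite Dlin_minus. reflexivity.
    - exact (EXD_ex1 0 (fun a b => Derive (fun z => Gr z b) a) U 0 0 (EXD_D1 1 Gr U (HGr 2%nat)) HU0).
    - exact (EXD_ex1 0 (fun a b => Derive (fun z => Gi a z) b) U 0 0 (EXD_D2 1 Gi U (HGi 2%nat)) HU0). }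
  assert (XI1 : Derive (fun t => Im (dzb G t 0)) 0 = / 2 * (partial_derive 2 0 Gi 0 0 + partial_derive 1 1 Gr 0 0)).
  { rewrite (Derive_ext _ (fun t => / 2 * (Derive (fun s => Gi s 0) t + Derive (fun s => Gr t s) 0))) by (intros; apply ImH).
    rewrite Dlin_plus. reflexivity.
    - exact (EXD_ex1 0 (fun a b => Derive (fun z => Gi z b) a) U 0 0 (EXD_D1 1 Gi U (HGi 2%nat)) HU0).
    - exact (EXD_ex1 0 (fun a b => Derive (fun z => Gr a z) b) U 0 0 (EXD_D2 1 Gr U (HGr 2%nat)) HU0). }
  assert (XR2 : Derive (fun s => Re (dzb G 0 s)) 0 = / 2 * (partial_derive 1 1 Gr 0 0 - partial_derive 0 2 Gi 0 0)).
  { rewrite (Derive_ext _ (fun s => / 2 * (Derive (fun t => Gr t s) 0 - Derive (fun t => Gi 0 t) s))) by (intros; apply ReH).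
    rewrite Dlin_minus.
    - rewrite <- (schw Gr U 0 0 HU (HGr 2%nat) HU0). reflexivity.
    - exact (EXD_ex2 0 (fun a b => Derive (fun z => Gr z b) a) U 0 0 (EXD_D1 1 Gr U (HGr 2%nat)) HU0).
    - exact (EXD_ex2 0 (fun a b => Derive (fun z => Gi a z) b) U 0 0 (EXD_D2 1 Gi U (HGi 2%nat)) HU0). }
  assert (XI2 : Derive (fun s => Im (dzb G 0 s)) 0 = / 2 * (partial_derive 1 1 Gi 0 0 + partial_derive 0 2 Gr 0 0)).
  { rewrite (Derive_ext _ (fun s => / 2 * (Derive (fun t => Gi t s) 0 + Derive (fun t => Gr 0 t) s))) by (intros; apply ImH).
    rewrite Dlin_plus.
    - rewrite <- (schw Gi U 0 0 HU (HGi 2%nat) HU0). reflexivity.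
    - exact (EXD_ex2 0 (fun a b => Derive (fun z => Gi z b) a) U 0 0 (EXD_D1 1 Gi U (HGi 2%nat)) HU0).
    - exact (EXD_ex2 0 (fun a b => Derive (fun z => Gr a z) b) U 0 0 (EXD_D2 1 Gr U (HGr 2%nat)) HU0). }
  assert (Z1 : Derive (fun t => Im (dzb G t 0)) 0 = 0).
  { rewrite (Derive_ext_loc _ (fun _ => 0)). apply Derive_const.
    eapply filter_imp; [| apply (loc1 U 0 0 HU HU0)]. intros t Ht. apply Hreal; auto. }
  assert (Z2 : Derive (fun s => Im (dzb G 0 s)) 0 = 0).
  { rewrite (Derive_ext_loc _ (fun _ => 0)). apply Derive_const.
    eapply filter_imp; [| apply (loc2 U 0 0 HU HU0)]. intros t Ht. apply Hreal; auto. }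
  assert (Z0 : / 2 * (partial_derive 1 0 Gi 0 0 + partial_derive 0 1 Gr 0 0) = 0).
  { transitivity (Im (dzb G 0 0)); [rewrite ImH; reflexivity| apply Hreal; auto]. }
  assert (H00 : Re (dzb G 0 0) = / 2 * (partial_derive 1 0 Gr 0 0 - partial_derive 0 1 Gi 0 0)).
  { rewrite ReH. reflexivity. }
  assert (H00i : Im (dzb G 0 0) = 0) by (apply Hreal; auto).
  unfold intrinsic_vanishing in HI. destruct (cmul_comp _ _ _ HI) as [HIr HIi].
  fold G in HIr, HIi.
  rewrite ReDz in HIr. rewrite ImDz in HIi.
  rewrite XR1, Z2, H00, H00i in HIr. rewrite Z1, XR2, H00, H00i in HIi.
  change (Re (G 0 0)) with (Gr 0 0) in HIr, HIi. change (Im (G 0 0)) with (Gi 0 0) in HIr, HIi.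
  assert (R1 : / 2 * (partial_derive 2 0 Gi 0 0 + partial_derive 1 1 Gr 0 0) = 0) by (rewrite <- XI1; exact Z1).
  assert (R2 : / 2 * (partial_derive 1 1 Gi 0 0 + partial_derive 0 2 Gr 0 0) = 0) by (rewrite <- XI2; exact Z2).
  rewrite ?T0, ?T1, ?T2, ?T3, ?T4, ?T5, ?S0, ?S1, ?S2, ?S3, ?S4, ?S5 in HIr.
  rewrite ?T0, ?T1, ?T2, ?T3, ?T4, ?T5, ?S0, ?S1, ?S2, ?S3, ?S4, ?S5 in HIi.
  rewrite ?T0, ?T1, ?T2, ?T3, ?T4, ?T5, ?S0, ?S1, ?S2, ?S3, ?S4, ?S5 in Z0.
  rewrite ?T0, ?T1, ?T2, ?T3, ?T4, ?T5, ?S0, ?S1, ?S2, ?S3, ?S4, ?S5 in R1.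
  rewrite ?T0, ?T1, ?T2, ?T3, ?T4, ?T5, ?S0, ?S1, ?S2, ?S3, ?S4, ?S5 in R2.
  destruct c0 as [a0 b0], c1 as [a1 b1], c2 as [a2 b2], c3 as [a3 b3], c4 as [a4 b4], c5 as [a5 b5].
  simpl in HIr, HIi, Z0, R1, R2.
  clear - HIr HIi Z0 R1 R2.
  simpl in *.
  assert (Hb1 : b1 = 0) by lra.
  assert (Ha5 : a5 = 2 * a4) by lra.
  assert (Hb5 : b5 = - 2 * b4) by lra.
  subst b1 a5 b5.
  assert (E1 : a0 * a1 + 2 * a4 = 0) by nra.
  assert (E2 : b0 * a1 - 2 * b4 = 0) by nra.
  replace (2 * (2 * 1) + 0 * (0 * 1)) with 4 by ring.
  split; apply injective_projections; simpl; field_simplify; nra.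
Qed.


Open Scope R_scope.
Theorem corollary5p1
  (h : R -> R -> R) (r : R) (c0 c1 c2 c3 c4 c5 g2 g3 : CC) :
  0 < r ->
  (forall x y, inball 0 0 r x y -> 0 < h x y) ->
  smooth_on (cplx h) (inball 0 0 r) ->
  intrinsic_vanishing h ->
  (* expansion  -h_z/h = c0 + c1 zbar + c2 z + c3 z^2 + c4 zbar^2 + c5 z zbar + O(|z|^3) *)
  (exists K delta, 0 < delta /\ forall z : CC, Cmod z < delta ->
     Cmod (mhz h z - (c0 + c1 * Cconj z + c2 * z + c3 * (z * z)
                      + c4 * (Cconj z * Cconj z) + c5 * (z * Cconj z)))%C
       <= K * Cmod z ^ 3) ->
  let g1 := (- c0 / 2)%C in
  (c2 + 2 * g1 * c0 + 6 * g2)%C = 0%C ->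
  (12 * g3 + c3 + 2 * g1 * c2 + 3 * g2 * c0)%C = 0%C ->
  let nu2 := (c5 - 2 * g1 * c1)%C in
  let nu3 := (c4 - c1 * Cconj g1)%C in
  let wmap := fun z : CC => (z + g1 * (z * z) + g2 * (z * z * z) + g3 * (z * z * z * z))%C in
  nu2 = 0%C /\ nu3 = 0%C /\
  (exists (delta K : R) (E : CC -> CC),
     0 < delta /\
     (forall z : CC, Cmod z < delta -> Cmod (E z) <= K * Cmod (wmap z) ^ 3) /\
     forall (Z : fun2) (t0 x0 rho : R),
       0 < rho ->
       smooth_on Z (inball t0 x0 rho) ->
       (forall t x, inball t0 x0 rho t x -> Cmod (Z t x) < r /\ SMF_at h Z t x) ->
       Cmod (Z t0 x0) < delta ->
       let W := fun t x => wmap (Z t x) in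
       (Ci * pd1 W t0 x0 + pd2 (pd2 W) t0 x0)%C =
       (c1 * Cconj (W t0 x0) * (pd2 W t0 x0 * pd2 W t0 x0)
        + E (Z t0 x0) * (pd2 W t0 x0 * pd2 W t0 x0))%C).

Proof.
  intros Hr Hpos Hs HI Hexp g1 H2 H3 nu2 nu3 wmap.
  assert (Hexp' : exists K delta, 0 < delta /\ forall z : CC, Cmod z < delta ->
     Cmod (mhz h z - Pp c0 c1 c2 c3 c4 c5 z)%C <= K * Cmod z ^ 3) by exact Hexp.
  destruct (partA h r c0 c1 c2 c3 c4 c5 Hr Hpos Hs HI Hexp') as [N2 N3].
  split; [exact N2|]. split; [exact N3|].
  destruct (E_bound (mhz h) c0 c1 c2 c3 c4 c5 g1 g2 g3 eq_refl H2 H3 N2 N3 Hexp') as [d [K [Hd [Hwp Hb]]]].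
  exists d, K, (Ef (mhz h) c1 g1 g2 g3). split; auto. split.
  - intros z Hz. exact (Hb z Hz).
  - intros Z t0 x0 rho Hrho HsZ HZ Hz0 W.
    assert (Hin0 : inball t0 x0 rho t0 x0) by (unfold inball; nra).
    exact (SMF_transform (mhz h) c1 g1 g2 g3 Z t0 x0 rho Hrho HsZ (proj2 (HZ t0 x0 Hin0)) (Hwp _ Hz0)).
Qed.
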